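(* Let $(u^\ast,W^\ast)$ be the minimizer of $f(u,W)$ (so that $u_i^\ast=\log(1+\sum_{k\ne y_i}e^{x_i^\top(w_k^\ast-w_{y_i}^\ast)})$). Then for every $i$, $u_i^\ast\le B_u$, where $B_u=\log(1+(K-1)e^{2B_xB_W})$, $B_x=\max_i\|x_i\|_2$ and $B_W^2=\frac{2}{\mu}N\log K$.
   Context: Data: $(y_i,x_i)$, $i=1,\dots,N$, $x_i\in\mathbb{R}^D$, $y_i\in\{1,\dots,K\}$, $K\ge 2$; $\mu>0$; $u\in\mathbb{R}^N$, $W=[w_1,\dots,w_K]\in\mathbb{R}^{D\times K}$ with Frobenius norm $\|W\|_2$; $$f(u,W)=\sum_{i=1}^N\Big[u_i+e^{-u_i}+\sum_{k\ne y_i}e^{x_i^\top(w_k-w_{y_i})-u_i}\Big]+\tfrac{\mu}{2}\|W\|_2^2.$$ *)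

(* Defs.v *)
From HB Require Import structures.
From mathcomp Require Import all_boot all_order all_algebra.
From mathcomp Require Import all_classical all_reals all_analysis.
Set Implicit Arguments. Unset Strict Implicit. Unset Printing Implicit Defensive.
Import Order.TTheory GRing.Theory Num.Theory.
Local Open Scope ring_scope.

(* Data: x : 'I_N -> 'rV[R]_D (feature vectors x_i), y : 'I_N -> 'I_K (labels),
   W : 'M[R]_(D, K) whose k-th column is w_k, u : 'I_N -> R. *)

Definition xdiff {R : realType} {D K : nat} (xi : 'rV[R]_D) (W : 'M[R]_(D, K))
  (k l : 'I_K) : R :=
  \sum_(d < D) xi 0 d * (W d k - W d l).

Definition vnorm {R : realType} {D : nat} (v : 'rV[R]_D) : R :=
  Num.sqrt (\sum_(d < D) v 0 d ^+ 2).

Definition frob {R : realType} {D K : nat} (W : 'M[R]_(D, K)) : R :=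
  Num.sqrt (\sum_(d < D) \sum_(k < K) W d k ^+ 2).

Definition fobj {R : realType} {N D K : nat} (mu : R)
  (x : 'I_N -> 'rV[R]_D) (y : 'I_N -> 'I_K)
  (u : 'I_N -> R) (W : 'M[R]_(D, K)) : R :=
  \sum_(i < N) (u i + expR (- u i)
                + \sum_(k < K | k != y i) expR (xdiff (x i) W k (y i) - u i))
  + mu / 2 * frob W ^+ 2.

Definition Bx {R : realType} {N D : nat} (x : 'I_N -> 'rV[R]_D) : R :=
  \big[Num.max/0]_(i < N) vnorm (x i).

Definition BW {R : realType} (N K : nat) (mu : R) : R :=
  Num.sqrt (2 / mu * N%:R * ln K%:R).

Definition Bu {R : realType} {N D : nat} (K : nat) (mu : R)
  (x : 'I_N -> 'rV[R]_D) : R :=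
  ln (1 + (K%:R - 1) * expR (2 * Bx x * BW N K mu)).

(* Main.v *)
Require Import Defs.
From HB Require Import structures.
From mathcomp Require Import all_boot all_order all_algebra.
From mathcomp Require Import all_classical all_reals all_analysis.
From mathcomp Require Import lra ring.
Import Order.TTheory GRing.Theory Num.Theory.
Local Open Scope ring_scope.

Lemma cs_sq (R : realType) (D : nat) (a b : 'I_D -> R) :
  (\sum_i a i * b i) ^+ 2 <= (\sum_i a i ^+ 2) * (\sum_i b i ^+ 2).
Proof.
have H0 : 0 <= \sum_i \sum_j (a i * b j - a j * b i) ^+ 2.
  by apply: sumr_ge0 => i _; apply: sumr_ge0 => j _; exact: sqr_ge0.
have E : \sum_i \sum_j (a i * b j - a j * b i) ^+ 2 =
   \sum_i \sum_j (a i ^+ 2 * b j ^+ 2) + \sum_i \sum_j (b i ^+ 2 * a j ^+ 2)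
   - 2 * \sum_i \sum_j ((a i * b i) * (a j * b j)).
  rewrite -big_split mulr_sumr -sumrB /=; apply: eq_bigr => i _.
  rewrite -big_split mulr_sumr -sumrB /=; apply: eq_bigr => j _.
  ring.
rewrite -!big_distrlr /= in E.
rewrite E {E} in H0; move: H0.
set A := \sum_(i < D) a i ^+ 2; set B := \sum_(i < D) b i ^+ 2.
set p := \sum_(i < D) a i * b i.
have -> : A * B + B * A - 2 * (p * p) = 2 * (A * B - p * p) by ring.
rewrite pmulr_rge0 // subr_ge0.
by rewrite expr2.
Qed.

Lemma cs_abs (R : realType) (D : nat) (a b : 'I_D -> R) :
  `|\sum_i a i * b i| <= Num.sqrt (\sum_i a i ^+ 2) * Num.sqrt (\sum_i b i ^+ 2).
Proof.
rewrite -sqrtrM; last by apply: sumr_ge0 => i _; exact: sqr_ge0.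
rewrite -sqrtr_sqr ler_sqrt ?cs_sq //.
by apply: mulr_ge0; apply: sumr_ge0 => i _; exact: sqr_ge0.
Qed.

Definition Ssum {R : realType} {N D K : nat} (x : 'I_N -> 'rV[R]_D) (y : 'I_N -> 'I_K)
  (W : 'M[R]_(D, K)) (i : 'I_N) : R :=
  \sum_(k < K | k != y i) expR (xdiff (x i) W k (y i)).

Lemma Ssum_ge0 {R : realType} {N D K : nat} (x : 'I_N -> 'rV[R]_D) (y : 'I_N -> 'I_K) W i :
  0 <= Ssum x y W i.
Proof. by apply: sumr_ge0 => k _; exact: expR_ge0. Qed.

Lemma fobj_eq {R : realType} {N D K : nat} (mu : R) (x : 'I_N -> 'rV[R]_D) (y : 'I_N -> 'I_K) u W :
  fobj mu x y u W = \sum_(i < N) (u i + expR (- u i) * (1 + Ssum x y W i)) + mu / 2 * frob W ^+ 2.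
Proof.
rewrite /fobj; congr (_ + _); apply: eq_bigr => i _.
rewrite mulrDr mulr1 addrA mulr_sumr /Ssum; congr (_ + _).
by apply: eq_bigr => k _; rewrite expRD mulrC.
Qed.

Lemma col_le_frob {R : realType} {D K : nat} (W : 'M[R]_(D, K)) k :
  Num.sqrt (\sum_(d < D) W d k ^+ 2) <= frob W.
Proof.
rewrite /frob ler_sqrt; last by apply: sumr_ge0 => d _; apply: sumr_ge0 => l _; exact: sqr_ge0.
apply: ler_sum => d _; rewrite (bigD1 k) //= lerDl.
by apply: sumr_ge0 => l _; exact: sqr_ge0.
Qed.

Lemma xdiff_le {R : realType} {D K : nat} (xi : 'rV[R]_D) (W : 'M[R]_(D, K)) k l :
  xdiff xi W k l <= 2 * vnorm xi * frob W.
Proof.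
have E : xdiff xi W k l = \sum_d xi 0 d * W d k - \sum_d xi 0 d * W d l.
  by rewrite /xdiff -sumrB; apply: eq_bigr => d _; rewrite mulrBr.
have hk := cs_abs _ _ (fun d => xi 0 d) (fun d => W d k).
have hl := cs_abs _ _ (fun d => xi 0 d) (fun d => W d l).
have fk := col_le_frob W k. have fl := col_le_frob W l.
have v0 : 0 <= vnorm xi by exact: sqrtr_ge0.
rewrite -/(vnorm xi) in hk hl.
have hk' := le_trans hk (ler_wpM2l v0 fk).
have hl' := le_trans hl (ler_wpM2l v0 fl).
move: hk' hl'; rewrite E.
set a := \sum_d xi 0 d * W d k; set b := \sum_d xi 0 d * W d l.
have := ler_norm a; have := ler_norm (- b); rewrite normrN.
move=> h1 h2 h3 h4.
have -> : 2 * vnorm xi * frob W = vnorm xi * frob W + vnorm xi * frob W by ring.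
lra.
Qed.
Lemma g_lb (R : realType) (u S : R) : 0 <= S ->
  ln (1 + S) + 1 <= u + expR (- u) * (1 + S).
Proof.
move=> hS; have hc : 0 < 1 + S by lra.
have -> : expR (- u) * (1 + S) = expR (- (u - ln (1 + S))).
  by rewrite opprB expRD lnK ?posrE // mulrC.
have := expR_ge1Dx (- (u - ln (1 + S))). lra.
Qed.

Lemma g_eq (R : realType) (S : R) : 0 <= S ->
  ln (1 + S) + expR (- ln (1 + S)) * (1 + S) = ln (1 + S) + 1.
Proof.
move=> hS; have hc : 0 < 1 + S by lra.
by rewrite expRN lnK ?posrE // mulVf // gt_eqF.
Qed.

Lemma g_ub (R : realType) (u S : R) : 0 <= S ->
  u + expR (- u) * (1 + S) <= ln (1 + S) + 1 -> u <= ln (1 + S).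
Proof.
move=> hS; have hc : 0 < 1 + S by lra.
have -> : expR (- u) * (1 + S) = expR (- (u - ln (1 + S))).
  by rewrite opprB expRD lnK ?posrE // mulrC.
move=> h; rewrite leNgt; apply/negP => hlt.
have hne : - (u - ln (1 + S)) != 0 by rewrite oppr_eq0 subr_eq0 gt_eqF.
have := expR_gt1Dx hne. lra.
Qed.

Theorem lemma2 (R : realType) (N D K : nat) (hK : (2 <= K)%N) (mu : R)
  (hmu : 0 < mu) (x : 'I_N -> 'rV[R]_D) (y : 'I_N -> 'I_K)
  (ustar : 'I_N -> R) (Wstar : 'M[R]_(D, K))
  (hmin : forall (u : 'I_N -> R) (W : 'M[R]_(D, K)),
      fobj mu x y ustar Wstar <= fobj mu x y u W) :
  forall i : 'I_N, ustar i <= Bu K mu x.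
Proof.
move=> i.
have hK1 : 2 <= K%:R :> R by rewrite (ler_nat R 2 K).
have h1 : ustar i <= ln (1 + Ssum x y Wstar i).
  pose u' := fun j => if j == i then ln (1 + Ssum x y Wstar i) else ustar j.
  have := hmin u' Wstar; rewrite !fobj_eq (bigD1 i) //= [X in _ <= X + _](bigD1 i) //=.
  have -> : \sum_(j < N | j != i) (u' j + expR (- u' j) * (1 + Ssum x y Wstar j)) =
            \sum_(j < N | j != i) (ustar j + expR (- ustar j) * (1 + Ssum x y Wstar j)).
    by apply: eq_bigr => j hj; rewrite /u' (negbTE hj).
  rewrite /u' eqxx.
  rewrite g_eq ?Ssum_ge0 // lerD2r lerD2r.
  by apply: g_ub; exact: Ssum_ge0.
have hS0 : forall j, Ssum x y 0 j = K%:R - 1.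
  move=> j; rewrite /Ssum.
  have -> : \sum_(k < K | k != y j) expR (xdiff (x j) 0 k (y j)) =
            \sum_(k < K | k != y j) (1 : R).
    apply: eq_bigr => k _; rewrite /xdiff big1 ?expR0 // => d _.
    by rewrite !mxE subrr mulr0.
  have E : \sum_(k < K) (1:R) = 1 + \sum_(k < K | k != y j) (1:R) by rewrite (bigD1 (y j)).
  have : \sum_(k < K) (1:R) = K%:R by rewrite sumr_const card_ord.
  lra.
have hfrob0 : frob (0 : 'M[R]_(D, K)) = 0.
  rewrite /frob big1 ?sqrtr0 // => d _; rewrite big1 // => k _.
  by rewrite mxE expr0n.
have hL : 0 <= ln (K%:R : R) by apply: ln_ge0; lra.
have h2 : frob Wstar <= BW N K mu.
  have := hmin (fun _ => ln K%:R) 0; rewrite !fobj_eq hfrob0 expr0n /= mulr0 addr0.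
  have -> : \sum_(i0 < N) (ln (K%:R : R) + expR (- ln (K%:R : R)) * (1 + Ssum x y 0 i0))
           = N%:R * (ln (K%:R : R) + 1).
    rewrite (eq_bigr (fun _ => ln (K%:R : R) + 1)); last first.
      move=> j _; rewrite hS0.
      have e : 1 + (K%:R - 1) = K%:R :> R by rewrite addrC subrK.
      have := @g_eq R (K%:R - 1); rewrite e; apply; lra.
    by rewrite sumr_const card_ord mulr_natl.
  have lb : N%:R <= \sum_(i0 < N) (ustar i0 + expR (- ustar i0) * (1 + Ssum x y Wstar i0)).
    apply: (@le_trans _ _ (\sum_(i0 < N) (1:R))).
      by rewrite sumr_const card_ord.
    apply: ler_sum => j _.
    have hs := Ssum_ge0 x y Wstar j.
    have := @g_lb R (ustar j) _ hs; have : 0 <= ln (1 + Ssum x y Wstar j) by apply: ln_ge0; lra.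
    lra.
  move=> hm.
  set F2 := frob Wstar ^+ 2 in hm.
  have hF : mu / 2 * F2 <= N%:R * ln (K%:R : R) by lra.
  have hF2 : F2 <= 2 / mu * N%:R * ln (K%:R : R).
    have -> : F2 = 2 / mu * (mu / 2 * F2) by field; rewrite gt_eqF.
    have -> : 2 / mu * N%:R * ln (K%:R : R) = 2 / mu * (N%:R * ln (K%:R : R)) by ring.
    apply: ler_wpM2l => //; apply: divr_ge0 => //; exact: ltW.
  have fr0 : 0 <= frob Wstar by exact: sqrtr_ge0.
  rewrite /BW -(ger0_norm fr0) -sqrtr_sqr ler_sqrt //.
  apply: mulr_ge0 => //; apply: mulr_ge0 => //; apply: divr_ge0 => //; exact: ltW.
have hv : vnorm (x i) <= Bx x by rewrite /Bx; exact: (le_bigmax 0 (fun j => vnorm (x j)) i).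
have hv0 : 0 <= vnorm (x i) by exact: sqrtr_ge0.
have fr0 : 0 <= frob Wstar by exact: sqrtr_ge0.
set c := expR (2 * Bx x * BW N K mu).
have h3 : forall k, expR (xdiff (x i) Wstar k (y i)) <= c.
  move=> k; rewrite ler_expR; apply: (le_trans (xdiff_le _ _ _ _)).
  rewrite -!mulrA ler_pM2l //; apply: ler_pM => //.
have h4 : Ssum x y Wstar i <= (K%:R - 1) * c.
  apply: (@le_trans _ _ (\sum_(k < K | k != y i) c)); first by apply: ler_sum => k _; exact: h3.
  have E : \sum_(k < K) c = c + \sum_(k < K | k != y i) c by rewrite (bigD1 (y i)).
  have : \sum_(k < K) c = K%:R * c by rewrite sumr_const card_ord mulr_natl.
  lra.
have hS := Ssum_ge0 x y Wstar i.
have hc : 0 < c by exact: expR_gt0.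
have hKc : 0 <= (K%:R - 1) * c by apply: mulr_ge0; lra.
apply: (le_trans h1); rewrite /Bu -/c ler_ln ?posrE //.
all: lra.
Qed.
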